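(* Assume Hypothesis C. Let $\hat s\in S$ be a multi-state, $L$ a labeling, and $\pi$ the priority rule keyed to $L$. Then the Evaluator (for $\hat s$, $L$, $\pi$) terminates with $V=V^{\pi}(\hat s)$.
   Context: There are $K$ bandits with pairwise disjoint finite nonempty state sets $N_1,\dots,N_K$; $N=N_1\cup\dots\cup N_K$; $b(j)$ is the $k$ with $j\in N_k$. Bandit $k$ has real transition rates $q(i,j)$ ($i,j\in N_k$) forming $q^k$ and real rewards $r(i)$ forming $r^k$. A multi-state $s$ contains exactly one state $s_k$ of each $N_k$; $S$ is the set of multi-states; $s_{\setminus k}=s\setminus\{s_k\}$. For a map $\delta:S\to\{1,\dots,K\}$ (stationary nonrandomized policy): $Q^{\delta}(s,t)=q(s_{\delta(s)},j)$ if $t=s_{\setminus\delta(s)}\cup\{j\}$ with $j\in N_{\delta(s)}$, else $0$; $R^{\delta}(s)=r(s_{\delta(s)})$; $V^{\delta}=(I-Q^{\delta})^{-1}R^{\delta}$. A matrix is transient if its powers tend to $0$ entrywise. Hypothesis C: each $q^k$ is entrywise nonnegative and transient, and at least one of: (RN) each $q^k$ is substochastic; (RA) $r(i)\le0$ for all $i\in N$; (RS) $r(i)\ge0$ for all $i\in N$. A labeling is an injective $L:N\cup\{0\}\to\{1,\dots,|N|+1\}$ with $L(0)=|N|+1$; the priority rule keyed to $L$ is $\pi(s)=\arg\min_k L(s_k)$. Finalized data: for each bandit $k$, start with the tableau $[(I-q^k),r^k]$ and $M=N_k$, writing the current tableau as $[(I-q),r]$; while $M\ne\emptyset$, let $i\in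 M$ minimize $L(i)$, multiply row $i$ by $1/[1-q(i,i)]$, for each $j\in M\setminus\{i\}$ add $q(j,i)$ (current value) times the updated row $i$ to row $j$, and remove $i$ from $M$. The final tableau $[(I-\tilde q^k),\tilde r^k]$ gives the finalized data $\tilde q(i,j),\tilde r(i)$. Evaluator: For each bandit $p$ define the vector $y^p\in\mathbb R^{N_p}$ by $y^p(j)=1$ if $j=\hat s_p$ and $y^p(j)=0$ otherwise. Set $V=0$. For $n=1,2,\dots,|N|$: let $i$ be the state with $L(i)=n$ and $k=b(i)$; replace $V$ by $V+\tilde r(i)\,y^k(i)\prod_{p\ne k}\big[\sum_{j\in N_p}y^p(j)\big]$; then for each $j\in N_k\setminus\{i\}$ replace $y^k(j)$ by $y^k(j)+y^k(i)\tilde q(i,j)$, and then set $y^k(i)=0$ (no other $y^p$ changes). *)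

(* Defs.v *)
From HB Require Import structures.
From mathcomp Require Import all_boot all_order all_algebra.
Set Implicit Arguments. Unset Strict Implicit. Unset Printing Implicit Defensive.
Import Order.TTheory GRing.Theory Num.Theory.
Local Open Scope ring_scope.

Section Bandits.
Variables (R : realFieldType) (I N : finType) (b : N -> I).
(* I : index set of bandits {1..K};  N : all states;  b j : bandit of j;
   N_k = [pred j | b j == k]. *)

Fixpoint rpow (A : pred N) (q : N -> N -> R) (n : nat) (i j : N) : R :=
  match n with
  | 0 => (i == j)%:R
  | n'.+1 => \sum_(l | A l) rpow A q n' i l * q l j
  end.

Definition transient (A : pred N) (q : N -> N -> R) : Prop :=
  forall i j, A i -> A j -> forall eps : R, 0 < eps ->
    exists N0 : nat, forall n : nat, (N0 <= n)%N -> `|rpow A q n i j| < eps.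

Definition hypC (q : N -> N -> R) (r : N -> R) : Prop :=
  (forall i j, b i = b j -> 0 <= q i j) /\
  (forall k, transient [pred j | b j == k] q) /\
  [\/ (forall i, \sum_(j | b j == b i) q i j <= 1)
    , (forall i, r i <= 0)
    | (forall i, 0 <= r i) ].

Definition mstate : finType := {s : {ffun I -> N} | [forall k, b (s k) == k]}.
Definition nS := #|{: mstate}|.
Definition sval_of (x : 'I_nS) : mstate := enum_val x.

(* labeling on N ∪ {0}, with 0 encoded as None *)
Definition labeling (L : option N -> nat) : Prop :=
  injective L /\ (forall x, (1 <= L x <= #|N|.+1)%N) /\ L None = #|N|.+1.

Definition priority_rule (L : option N -> nat) (pi : mstate -> I) : Prop :=
  forall (s : mstate) k, (L (Some (val s (pi s))) <= L (Some (val s k)))%N.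

Definition Qfun (q : N -> N -> R) (delta : mstate -> I) (s t : mstate) : R :=
  let k := delta s in
  if [forall p, (p != k) ==> (val t p == val s p)]
  then q (val s k) (val t k) else 0.

Definition Qmx q delta : 'M[R]_nS :=
  \matrix_(x, y) Qfun q delta (sval_of x) (sval_of y).

Definition Rvec (r : N -> R) (delta : mstate -> I) : 'cV[R]_nS :=
  \col_x r (val (sval_of x) (delta (sval_of x))).

Definition Vdelta q r delta (s : mstate) : R :=
  (invmx (1%:M - Qmx q delta) *m Rvec r delta) (enum_rank s : 'I_nS) 0.

(* tableau [(I - q), r] : A = (I - q) part (rows/cols over N), c = r part *)
Definition qcur (A : N -> N -> R) (i j : N) : R := (i == j)%:R - A i j.

Definition elim_step (M : {set N}) (i : N) (T : (N -> N -> R) * (N -> R)) :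
    (N -> N -> R) * (N -> R) :=
  let (A, c) := T in
  let d := 1 / (1 - qcur A i i) in
  let A1 := fun j l => if j == i then d * A i l else A j l in
  let c1 := fun j => if j == i then d * c i else c j in
  let A2 := fun j l => if (j \in M) && (j != i)
                       then A1 j l + qcur A1 j i * A1 i l else A1 j l in
  let c2 := fun j => if (j \in M) && (j != i)
                     then c1 j + qcur A1 j i * c1 i else c1 j in
  (A2, c2).

(* while M <> set0 (fuel #|N| suffices) *)
Fixpoint elim_loop (L : option N -> nat) (fuel : nat) (M : {set N})
    (T : (N -> N -> R) * (N -> R)) : (N -> N -> R) * (N -> R) :=
  match fuel with
  | 0 => T
  | f.+1 =>
    match [pick i in M | [forall j in M, (L (Some i) <= L (Some j))%N]] with
    | None => T
    | Some i => elim_loop L f (M :\ i) (elim_step M i T)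
    end
  end.

Definition final_tableau L (q : N -> N -> R) (r : N -> R) (k : I) :=
  elim_loop L #|N| [set j | b j == k] (fun i j => (i == j)%:R - q i j, r).

Definition qtil L q r (i j : N) : R := (i == j)%:R - (final_tableau L q r (b i)).1 i j.
Definition rtil L q r (i : N) : R := (final_tableau L q r (b i)).2 i.

(* y : N -> R stores all y^p simultaneously (y^p = y restricted to N_p) *)
Definition eval_step L q r (n : nat) (VY : R * (N -> R)) : R * (N -> R) :=
  let (V, y) := VY in
  match [pick i | L (Some i) == n] with
  | None => VY
  | Some i =>
    let k := b i in
    let V' := V + rtil L q r i * y i *
                  \prod_(p | p != k) (\sum_(j | b j == p) y j) in
    let y1 := fun j => if (b j == k) && (j != i) then y j + y i * qtil L q r i j
                       else y j in
    let y2 := fun j => if j == i then 0 else y1 j in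
    (V', y2)
  end.

Definition evaluator L q r (shat : mstate) : R :=
  (foldl (fun VY n => eval_step L q r n VY)
     (0, fun j => (j == val shat (b j))%:R) (iota 1 #|N|)).1.

End Bandits.

(* Main.v *)
Require Import Defs.
From HB Require Import structures.
From mathcomp Require Import all_boot all_order all_algebra.
From mathcomp Require Import ring zify.
Import Order.TTheory GRing.Theory Num.Theory.
Local Open Scope ring_scope.

Lemma unif_N0 (T : eqType) (Q : T -> nat -> Prop) (s : seq T) :
  (forall m, m \in s -> exists N0, forall n, (N0 <= n)%N -> Q m n) ->
  exists N0, forall m n, m \in s -> (N0 <= n)%N -> Q m n.
Proof.
elim: s => [|x s IH] H; first by exists 0%N => m n.
have [N1 H1] := H x (mem_head _ _).
have [N2 H2] : exists N0, forall m n, m \in s -> (N0 <= n)%N -> Q m n.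
  by apply: IH => m ms; apply: H; rewrite in_cons ms orbT.
exists (maxn N1 N2) => m n; rewrite in_cons => /orP [/eqP -> | ms] Hn.
  by apply: H1; apply: leq_trans Hn; apply: leq_maxl.
by apply: H2 => //; apply: leq_trans Hn; apply: leq_maxr.
Qed.

Section Kern.
Variables (R : realFieldType) (I N : finType) (b : N -> I) (q : N -> N -> R).
Hypothesis qnn : forall i j, b i = b j -> 0 <= q i j.
Variable k : I.
Hypothesis qtr : transient [pred j | b j == k] q.

Lemma rpow_sum (P : pred N) (u : N -> R) :
  (forall l, P l -> u l = \sum_(m | P m) u m * q m l) ->
  forall n l, P l -> u l = \sum_(m | P m) u m * rpow P q n m l.
Proof.
move=> Hu; elim=> [|n IH] l Pl /=.
  rewrite (bigD1 l) //= eqxx mulr1 big1 ?addr0 // => m /andP [_ /negbTE ->].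
  by rewrite mulr0.
rewrite (Hu l Pl).
under eq_bigr => m _ do rewrite mulr_sumr.
rewrite exchange_big /=; apply: eq_bigr => l' Pl'.
rewrite (IH l' Pl') mulr_suml; apply: eq_bigr => m _; by rewrite mulrA.
Qed.

Lemma rpow_mono (P : pred N) : (forall m, P m -> b m = k) ->
  forall n m l, b l = k ->
  0 <= rpow P q n m l <= rpow [pred j | b j == k] q n m l.
Proof.
move=> HP; elim=> [|n IH] m l bl /=.
  by rewrite lexx ler0n.
apply/andP; split.
  apply: sumr_ge0 => l' Pl'; apply: mulr_ge0.
    by case/andP: (IH m l' (HP l' Pl')).
  by apply: qnn; rewrite bl (HP l' Pl').
rewrite [X in _ <= X](bigID P) /=.
apply: ler_wpDr.
  apply: sumr_ge0 => l' /andP [bl' _]; apply: mulr_ge0.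
    by case/andP: (IH m l' (eqP bl')) => H1 H2; apply: le_trans H2.
  by apply: qnn; rewrite bl (eqP bl').
rewrite [X in _ <= X](eq_bigl P); last first.
  by move=> l'; apply/andP/idP => [[]//|Pl']; split=> //; rewrite /= HP.
apply: ler_sum => l' Pl'; apply: ler_wpM2r.
  by apply: qnn; rewrite bl (HP l' Pl').
by case/andP: (IH m l' (HP l' Pl')).
Qed.

Lemma kernel0 (P : pred N) (u : N -> R) : (forall m, P m -> b m = k) ->
  (forall m, u m != 0 -> P m) ->
  (forall l, P l -> u l = \sum_(m | P m) u m * q m l) -> forall l, u l = 0.
Proof.
move=> HP Hsupp Hu l; apply/eqP/negPn/negP => ul0.
have Pl := Hsupp _ ul0.
set S := \sum_(m | P m) `|u m|.
have S0 : 0 <= S by apply: sumr_ge0.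
set eps := `|u l| / (1 + S).
have eps0 : 0 < eps by rewrite divr_gt0 ?normr_gt0 // ltr_pwDl.
have [N0 HN0] : exists N0, forall m n, m \in enum N -> (N0 <= n)%N ->
    P m -> `|rpow [pred j | b j == k] q n m l| < eps.
  apply: unif_N0 => m _; case Pm: (P m); last by exists 0%N.
  have [N0 HN] := qtr m l (introT eqP (HP m Pm)) (introT eqP (HP l Pl)) eps eps0.
  by exists N0 => n Hn _; apply: HN.
have ueq := @rpow_sum P u Hu N0 l Pl.
have : `|u l| <= S * eps.
  rewrite ueq; apply: le_trans (ler_norm_sum _ _ _) _.
  rewrite /S mulr_suml; apply: ler_sum => m Pm.
  rewrite normrM; apply: ler_wpM2l => //.
  have /andP [h1 h2] := @rpow_mono P HP N0 m l (HP l Pl).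
  rewrite ger0_norm //; apply: (le_trans h2); apply: (le_trans (ler_norm _)).
  apply: ltW; apply: HN0 => //; by rewrite mem_enum.
rewrite /eps mulrA => H.
have : `|u l| < `|u l| .
  apply: (le_lt_trans H).
  rewrite ltr_pdivrMr ?ltr_pwDl // mulrC ltr_pM2l ?normr_gt0 //.
  by rewrite ltrDr ltr01.
by rewrite ltxx.
Qed.
End Kern.


Lemma sum_supp (R : realFieldType) (N : finType) (Q : pred N) (u F : N -> R) :
  (forall m, u m != 0 -> Q m) ->
  \sum_(m | Q m) u m * F m = \sum_m u m * F m.
Proof.
move=> H; rewrite [RHS](bigID Q) /= [X in _ + X]big1 ?addr0 // => m /negP Qm.
by case: (eqVneq (u m) 0) => [->|/H //]; rewrite mul0r.
Qed.

Section Elim.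
Variables (R : realFieldType) (I N : finType) (b : N -> I) (q : N -> N -> R) (r : N -> R).
Variable L : option N -> nat.
Hypothesis Linj : injective L.
Hypothesis qnn : forall i j, b i = b j -> 0 <= q i j.
Variable k : I.
Hypothesis qtr : transient [pred j | b j == k] q.

Local Notation Lb j := (L (Some j)).

Definition Inv (M : {set N}) (T : (N -> N -> R) * (N -> R)) : Prop :=
 [/\ (forall j, j \in M -> b j = k),
     (forall j l, j \in M -> b l = k -> l \notin M -> (Lb l < Lb j)%N),
     (forall j, b j = k -> exists u : N -> R,
        [/\ (forall m, u m != 0 -> [/\ b m = k, (Lb m <= Lb j)%N & (m == j) || (m \notin M)]),
            (forall l, b l = k -> T.1 j l = \sum_(m | b m == k) u m * ((m == l)%:R - q m l)),
            T.2 j = \sum_(m | b m == k) u m * r m &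
            (j \in M -> u j = 1)]),
     (forall j l, j \in M -> b l = k -> l \notin M -> T.1 j l = 0) &
     (forall j, b j = k -> j \notin M -> T.1 j j = 1 /\
        forall l, b l = k -> (Lb l < Lb j)%N -> T.1 j l = 0)].

Lemma sum_delta (u : N -> R) l : b l = k ->
  \sum_(m | b m == k) u m * ((m == l)%:R - q m l) =
  u l - \sum_(m | b m == k) u m * q m l.
Proof.
move=> bl; under eq_bigr => m _ do rewrite mulrBr.
rewrite sumrB; congr (_ - _).
rewrite (bigD1 l) ?bl //= eqxx mulr1 big1 ?addr0 // => m /andP [_ /negbTE ->].
by rewrite mulr0.
Qed.

Lemma pivot_nz M A c i : Inv M (A, c) -> i \in M -> A i i != 0.
Proof.
move=> [I0 I1 I2 I5 I6] iM; apply/negP => /eqP Aii.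
have bi := I0 i iM.
have [u [us uA uc u1]] := I2 i bi.
pose P := fun m => (b m == k) && ((m == i) || (m \notin M)).
have HP : forall m, P m -> b m = k by move=> m /andP [/eqP].
have Hs : forall m, u m != 0 -> P m.
  by move=> m /us [bm _ H]; rewrite /P bm eqxx.
have Hu : forall l, P l -> u l = \sum_(m | P m) u m * q m l.
  move=> l /andP [/eqP bl Hl].
  have : A i l = 0.
    by case/orP: Hl => [/eqP -> // | lM]; apply: I5.
  rewrite [A i l]uA // sum_delta // => /eqP; rewrite subr_eq0 => /eqP ->.
  rewrite (@sum_supp _ _ (fun m => b m == k) u); last by move=> m /us [-> _ _].
  by rewrite (@sum_supp _ _ P u).
have := @kernel0 R I N b q qnn k qtr P u HP Hs Hu i.
by rewrite u1 // => /eqP; rewrite oner_eq0.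
Qed.


Lemma Inv_step M A c i : Inv M (A, c) -> i \in M ->
  (forall j, j \in M -> (Lb i <= Lb j)%N) ->
  Inv (M :\ i) (elim_step M i (A, c)).
Proof.
move=> Hinv iM imin.
have piv := @pivot_nz M A c i Hinv iM.
move: Hinv => [I0 I1 I2 I5 I6].
have bi := I0 i iM.
have [ui [ui_s ui_A ui_c ui1]] := I2 i bi.
rewrite /= in I5 I6 ui_A ui_c.
set d := (A i i)^-1.
have dE : 1 / (1 - qcur A i i) = d.
  by rewrite /qcur eqxx opprB addrC subrK div1r.
have stepA : forall j l, (elim_step M i (A, c)).1 j l =
   if j == i then d * A i l else if j \in M then A j l - A j i * (d * A i l)
   else A j l.
  move=> j l; rewrite /elim_step /= dE /qcur.
  case: (eqVneq j i) => [->|ji] /=; first by rewrite andbF.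
  by rewrite andbT; case: (j \in M) => //; rewrite eqxx sub0r mulNr.
have stepc : forall j, (elim_step M i (A, c)).2 j =
   if j == i then d * c i else if j \in M then c j - A j i * (d * c i)
   else c j.
  move=> j; rewrite /elim_step /= dE /qcur.
  case: (eqVneq j i) => [->|ji] /=; first by rewrite andbF.
  by rewrite andbT; case: (j \in M) => //; rewrite eqxx sub0r mulNr.
have ltij : forall j, j \in M -> j != i -> (Lb i < Lb j)%N.
  move=> j jM ji; rewrite ltn_neqAle imin // andbT.
  apply/negP => /eqP /Linj [] /eqP; by rewrite eq_sym (negbTE ji).
have notM' : forall m, m \notin M -> m \notin M :\ i.
  by move=> m mM; rewrite in_setD1 (negbTE mM) andbF.
have iM' : i \notin M :\ i by rewrite in_setD1 eqxx.
split.
- by move=> j; rewrite in_setD1 => /andP [_ /I0].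
- move=> j l; rewrite in_setD1 => /andP [ji jM] bl.
  rewrite in_setD1 negb_and negbK => /orP [/eqP -> | lM].
    exact: ltij.
  exact: I1.
- move=> j bj.
  case: (eqVneq j i) => [->|ji].
    exists (fun m => d * ui m); split.
    + move=> m; rewrite mulf_eq0 negb_or => /andP [_ /ui_s [bm Lm H]].
      split=> //; case/orP: H => [/eqP ->|/notM' ->]; by rewrite ?eqxx ?orbT.
    + move=> l bl; rewrite stepA eqxx ui_A // mulr_sumr.
      by apply: eq_bigr => m _; rewrite mulrA.
    + rewrite stepc eqxx ui_c mulr_sumr.
      by apply: eq_bigr => m _; rewrite mulrA.
    + by rewrite (negbTE iM').
  have [uj [uj_s uj_A uj_c uj1]] := I2 j bj.
  rewrite /= in uj_A uj_c.
  case jM: (j \in M).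
    exists (fun m => uj m - A j i * d * ui m); split.
    + move=> m H.
      case: (eqVneq (uj m) 0) => [ujm|/uj_s [bm Lm Hm]]; last first.
        split=> //; case/orP: Hm => [->//|/notM' ->]; by rewrite orbT.
      move: H; rewrite ujm sub0r oppr_eq0 mulf_eq0 negb_or => /andP [_ /ui_s [bm Lm Hm]].
      split=> //.
        by apply: leq_trans Lm _; apply: ltnW; apply: ltij.
      case/orP: Hm => [/eqP ->|/notM' ->]; by rewrite ?iM' orbT.
    + move=> l bl; rewrite stepA (negbTE ji) jM ui_A // uj_A //.
      rewrite !mulr_sumr -sumrB; apply: eq_bigr => m _; ring.
    + rewrite stepc (negbTE ji) jM ui_c uj_c.
      rewrite !mulr_sumr -sumrB; apply: eq_bigr => m _; ring.
    + move=> _; rewrite uj1 //.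
      have -> : ui j = 0.
        apply/eqP/negPn/negP => /ui_s [_ _]; by rewrite (negbTE ji) jM.
      by rewrite mulr0 subr0.
  exists uj; split.
  + move=> m /uj_s [bm Lm Hm]; split=> //.
    case/orP: Hm => [->//|/notM' ->]; by rewrite orbT.
  + by move=> l bl; rewrite stepA (negbTE ji) jM uj_A.
  + by rewrite stepc (negbTE ji) jM uj_c.
  + by rewrite in_setD1 jM andbF.
- move=> j l; rewrite in_setD1 => /andP [ji jM] bl.
  rewrite stepA (negbTE ji) jM.
  rewrite in_setD1 negb_and negbK => /orP [/eqP -> | lM].
    by rewrite /d mulVf // mulr1 subrr.
  by rewrite I5 // (I5 i l) // !mulr0 subr0.
- move=> j bj; rewrite in_setD1 negb_and negbK => /orP [/eqP -> | jM].
    rewrite stepA eqxx mulVf //; split=> // l bl Ll.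
    have lM : l \notin M.
      by apply/negP => /imin; rewrite leqNgt Ll.
    by rewrite stepA eqxx (I5 i l) // mulr0.
  have ji : j != i by apply: contraNneq jM => ->.
  have [H1 H2] := I6 j bj jM.
  rewrite stepA (negbTE ji) (negbTE jM); split=> // l bl Ll.
  by rewrite stepA (negbTE ji) (negbTE jM) H2.
Qed.

Lemma Inv_loop f : forall M T, Inv M T -> (#|M| <= f)%N ->
  Inv set0 (elim_loop L f M T).
Proof.
elim: f => [|f IH] M T Hinv Hc /=.
  by move: Hc; rewrite leqn0 cards_eq0 => /eqP <-.
case: pickP => [i /andP [iM /forallP Hmin] | Hnone].
  case: T Hinv => A c Hinv.
  apply: IH; first apply: Inv_step => // j jM.
    by have := Hmin j; rewrite jM.
  by move: Hc; rewrite (cardsD1 i M) iM.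
case: (set_0Vmem M) => [E|[x xM]]; first by rewrite -E.
have := arg_minnP (fun j => L (Some j)) xM.
case=> j jM Hj.
have := Hnone j => /=.
have -> : j \in M by [].
suff -> : [forall (j0 | j0 \in M), (Lb j <= Lb j0)%N] by [].
by apply/forall_inP => j0 j0M; apply: Hj.
Qed.


Lemma sum_ind (F : N -> R) j : b j = k ->
  \sum_(m | b m == k) (m == j)%:R * F m = F j.
Proof.
move=> bj; rewrite (bigD1 j) ?bj //= eqxx mul1r big1 ?addr0 // => m /andP [_ /negbTE ->].
by rewrite mul0r.
Qed.

Lemma Inv_init : Inv [set j | b j == k] (fun i j => (i == j)%:R - q i j, r).
Proof.
split.
- by move=> j; rewrite inE => /eqP.
- by move=> j l _ bl; rewrite inE bl eqxx.
- move=> j bj; exists (fun m => (m == j)%:R); split.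
  + move=> m; case: (eqVneq m j) => [->|] /= H; last by move: H; rewrite eqxx.
    by split=> //; rewrite eqxx.
  + by move=> l bl; rewrite sum_ind.
  + by rewrite sum_ind.
  + by rewrite eqxx.
- by move=> j l _ bl; rewrite inE bl eqxx.
- by move=> j bj; rewrite inE bj eqxx.
Qed.

Lemma final_Inv : Inv set0 (final_tableau b L q r k).
Proof.
apply: Inv_loop; first exact: Inv_init.
exact: max_card.
Qed.

End Elim.

Set Implicit Arguments. Unset Strict Implicit.

Section Ms.
Variables (R : realFieldType) (I N : finType) (b : N -> I).
Local Notation MS := (mstate b).

Lemma bs (s : MS) p : b (val s p) = p.
Proof. by apply/eqP; exact: (forallP (valP s) p). Qed.

Lemma upd_proof (s : MS) j :
  [forall p, b ([ffun p => if p == b j then j else val s p] p) == p].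
Proof.
apply/forallP => p; rewrite ffunE; case: (eqVneq p (b j)) => [->|_].
  exact: eqxx.
by rewrite bs.
Qed.

Definition upd (s : MS) (j : N) : MS :=
  @exist {ffun I -> N} (fun f => [forall p, b (f p) == p]) _ (upd_proof s j).

Lemma updE s j p : val (upd s j) p = if p == b j then j else val s p.
Proof. by rewrite /= ffunE. Qed.

Lemma ms_eq (s t : MS) : (forall p, val s p = val t p) -> s = t.
Proof. by move=> H; apply: val_inj; apply/ffunP. Qed.

Lemma upd_upd s j l : b j = b l -> upd (upd s j) l = upd s l.
Proof.
move=> bjl; apply: ms_eq => p; rewrite !updE.
rewrite bjl; case: eqP => //.
Qed.

Lemma upd_self s p : upd s (val s p) = s.
Proof. by apply: ms_eq => p'; rewrite updE bs; case: eqP => [->|]. Qed.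

Lemma upd_at s j : val (upd s j) (b j) = j.
Proof. by rewrite updE eqxx. Qed.

Lemma sum_ms (G : {ffun I -> N} -> R) :
  \sum_(f : {ffun I -> N} | [forall p, b (f p) == p]) G f = \sum_(s : MS) G (val s).
Proof.
rewrite (reindex_omap (val : MS -> {ffun I -> N}) insub); last first.
  by move=> f Pf; rewrite insubT.
apply: eq_bigl => -[f Pf] /=; rewrite Pf /= insubT /=; apply/eqP; congr Some; exact: val_inj.
Qed.

Lemma prod_sum (z : N -> R) :
  \prod_p \sum_(j | b j == p) z j = \sum_(s : MS) \prod_p z (val s p).
Proof.
under eq_bigr => p _ do rewrite big_mkcond /=.
rewrite bigA_distr_bigA /= -(sum_ms (fun f => \prod_p z (f p))).
rewrite (bigID (fun f : {ffun I -> N} => [forall p, b (f p) == p])) /=.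
rewrite [X in _ + X]big1 ?addr0.
  by apply: eq_bigr => f /forallP H; apply: eq_bigr => p _; rewrite H.
move=> f /forallPn [p Hp]; rewrite (bigD1 p) //= (negbTE Hp) mul0r //.
Qed.

Lemma sumQ (q : N -> N -> R) (delta : MS -> I) (g : MS -> R) s :
  \sum_t Qfun q delta s t * g t =
  \sum_(j | b j == delta s) q (val s (delta s)) j * g (upd s j).
Proof.
set k := delta s.
have E : forall j, b j == k -> q (val s k) j * g (upd s j) =
    \sum_t (t == upd s j)%:R * (Qfun q delta s t * g t).
  move=> j bj; rewrite (bigD1 (upd s j)) //= eqxx mul1r big1 ?addr0.
    rewrite /Qfun -/k; case: ifP => [_|/negP H].
      by rewrite -(eqP bj) upd_at.
    exfalso; apply: H; apply/forallP => p; apply/implyP => pk.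
    by rewrite updE (eqP bj) (negbTE pk).
  by move=> t /negbTE ->; rewrite mul0r.
rewrite (eq_bigr _ E) exchange_big /=; apply: eq_bigr => t _.
rewrite -mulr_suml.
case C: [forall p, (p != k) ==> (val t p == val s p)].
  rewrite (bigD1 (val t k)) ?bs //= big1 ?addr0.
    suff -> : t == upd s (val t k) by rewrite mul1r.
    apply/eqP; apply: ms_eq => p; rewrite updE bs.
    case: eqP => [->//|/eqP pk]; apply/eqP.
    by move/forallP: C => /(_ p) /implyP; apply.
  move=> j /andP [bj jt]; case: eqP => // E1; exfalso.
  move/negP: jt; apply; rewrite E1 -(eqP bj) upd_at //.
have -> : Qfun q delta s t = 0 by rewrite /Qfun -/k C.
by rewrite !mul0r mulr0.
Qed.

End Ms.

Set Implicit Arguments. Unset Strict Implicit.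

Section Main.
Variables (R : realFieldType) (I N : finType) (b : N -> I).
Variables (q : N -> N -> R) (r : N -> R) (L : option N -> nat).
Variable pi : mstate b -> I.
Hypothesis qnn : forall i j, b i = b j -> 0 <= q i j.
Hypothesis qtr : forall k, transient [pred j | b j == k] q.
Hypothesis Linj : injective L.
Hypothesis Hpi : priority_rule L pi.
Local Notation MS := (mstate b).
Local Notation Lb j := (L (Some j)).
Local Notation Afin i := ((final_tableau b L q r (b i)).1 i).
Local Notation qt := (qtil b L q r).
Local Notation rt := (rtil b L q r).

Lemma final_props i : exists u : N -> R,
  [/\ (forall m, u m != 0 -> b m = b i /\ (Lb m <= Lb i)%N),
      (forall l, b l = b i -> Afin i l = \sum_(m | b m == b i) u m * ((m == l)%:R - q m l)),
      rt i = \sum_(m | b m == b i) u m * r m,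
      Afin i i = 1 &
      (forall l, b l = b i -> (Lb l < Lb i)%N -> Afin i l = 0)].
Proof.
have [I0 I1 I2 I5 I6] := @final_Inv R I N b q r L Linj qnn (b i) (@qtr (b i)).
have [u [us uA uc _]] := I2 i erefl.
have [H1 H2] := I6 i erefl (negbT (in_set0 i)).
exists u; split => //.
by move=> m /us [bm Lm _].
Qed.

Lemma qt_supp i j : b j = b i -> j != i -> qt i j != 0 -> (Lb i < Lb j)%N.
Proof.
move=> bj ji; have ij : (i == j) = false by rewrite eq_sym (negbTE ji).
rewrite /qtil ij sub0r oppr_eq0.
have [u [_ _ _ _ H5]] := final_props i.
rewrite ltn_neqAle; case: (ltngtP (Lb j) (Lb i)) => [lt|//|eq].
  by rewrite H5 // eqxx.
by move/Linj: eq => [] /eqP; rewrite (negbTE ji).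
Qed.

Lemma pi_lt (s : MS) (p : I) : p != pi s -> (Lb (val s (pi s)) < Lb (val s p))%N.
Proof.
move=> ps; rewrite ltn_neqAle Hpi andbT; apply/negP => /eqP /Linj [] E.
by move: ps; rewrite -(bs s p) -E bs eqxx.
Qed.

Lemma pi_char (s : MS) (k : I) : (forall p, p != k -> (Lb (val s k) < Lb (val s p))%N) -> pi s = k.
Proof.
move=> H; apply/eqP/negPn/negP => pk.
have h1 := H _ pk.
have kp : k != pi s by rewrite eq_sym.
have h2 := pi_lt kp.
by move: (ltn_trans h1 h2); rewrite ltnn.
Qed.


Lemma phase (rr : N -> R) (g : MS -> R) :
  (forall s : MS, g s = rr (val s (pi s)) +
      \sum_(j | b j == pi s) q (val s (pi s)) j * g (upd s j)) ->
  forall s : MS, exists u : N -> R,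
    rt (val s (pi s)) = \sum_(m | b m == pi s) u m * r m /\
    g s = \sum_(m | b m == pi s) u m * rr m +
          \sum_(j | (b j == pi s) && (j != val s (pi s)))
             qt (val s (pi s)) j * g (upd s j).
Proof.
move=> Hg s; set k := pi s; set i := val s k.
have bi : b i = k by rewrite /i bs.
have [u [us uA uc A1 _]] := final_props i.
rewrite bi in us uc.
have uA' : forall l, b l = k -> Afin i l = \sum_(m | b m == k) u m * ((m == l)%:R - q m l).
  by move=> l bl; rewrite uA ?bi.
exists u; split => //.
pose f l := g (upd s l).
have Hf : forall m, b m = k -> (Lb m <= Lb i)%N ->
    f m = rr m + \sum_(j | b j == k) q m j * f j.
  move=> m bm Lm.
  have pk : pi (upd s m) = k.
    apply: pi_char => p pk; rewrite !updE bm eqxx (negbTE pk).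
    by apply: leq_trans (pi_lt pk); rewrite ltnS.
  rewrite /f Hg pk updE bm eqxx; congr (_ + _).
  by apply: eq_bigr => j /eqP bj; rewrite upd_upd // bj.
have key : \sum_(l | b l == k) Afin i l * f l = \sum_(m | b m == k) u m * rr m.
  under eq_bigr => l /eqP bl do rewrite uA' // mulr_suml.
  rewrite exchange_big /=; apply: eq_bigr => m /eqP bm.
  case: (eqVneq (u m) 0) => [->|/us [_ Lm]].
    by rewrite mul0r big1 // => l _; rewrite mul0r mul0r.
  under eq_bigr => l _ do rewrite -mulrA.
  rewrite -mulr_sumr; congr (_ * _).
  under eq_bigr => l _ do rewrite mulrBl.
  rewrite sumrB (bigD1 m) ?bm //= eqxx mul1r big1 ?addr0.
    by rewrite (Hf m bm Lm) addrK.
  by move=> l /andP [_ /negbTE]; rewrite eq_sym => ->; rewrite mul0r.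
move: key; rewrite (bigD1 i) /=; last by rewrite bi.
rewrite A1 mul1r /f upd_self => key.
rewrite -key -addrA -[LHS]addr0; congr (_ + _).
rewrite -big_split /= big1 // => j /andP [_ ji].
have ij : (i == j) = false by rewrite eq_sym (negbTE ji).
rewrite /qtil ij sub0r mulNr; ring.
Qed.


Hypothesis Lbound : forall x, (L x <= #|N|.+1)%N.

Lemma ml_upd (s : MS) j : b j = pi s ->
  (Lb (val s (pi s)) < Lb j)%N ->
  (Lb (val s (pi s)) < Lb (val (upd s j) (pi (upd s j))))%N.
Proof.
move=> bj lt; set t := upd s j; rewrite updE.
case: eqP => [_ //| /eqP ne]; apply: pi_lt; by rewrite -bj.
Qed.

Lemma hom_zero (x : MS -> R) :
  (forall s, x s = \sum_(j | b j == pi s) q (val s (pi s)) j * x (upd s j)) ->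
  forall s, x s = 0.
Proof.
move=> Hx.
have Hg : forall s : MS, x s = (fun _ => 0 : R) (val s (pi s)) +
    \sum_(j | b j == pi s) q (val s (pi s)) j * x (upd s j).
  by move=> s; rewrite add0r.
suff H : forall n (s : MS), (#|N|.+2 - Lb (val s (pi s)) <= n)%N -> x s = 0.
  by move=> s; apply: (H #|N|.+2); rewrite leq_subr.
elim=> [|n IH] s Hs.
  have := Lbound (Some (val s (pi s))); lia.
have [u [_ E]] := @phase (fun _ => 0) x Hg s.
rewrite E big1 ?add0r; last by move=> m _; rewrite mulr0.
apply: big1 => j /andP [/eqP bj ji].
case: (eqVneq (qt (val s (pi s)) j) 0) => [->|nz]; first by rewrite mul0r.
have lt := qt_supp (etrans bj (esym (bs s (pi s)))) ji nz.
rewrite IH ?mulr0 //.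
have := ml_upd bj lt; have := Lbound (Some (val (upd s j) (pi (upd s j)))).
lia.
Qed.


Lemma sum_I (F : 'I_(nS b) -> R) : \sum_y F y = \sum_(t : MS) F (enum_rank t).
Proof.
rewrite (reindex (@enum_rank MS)) //; exists enum_val => y _.
  exact: enum_rankK.
exact: enum_valK.
Qed.

Local Notation Amx := (1%:M - Qmx q pi).

Lemma mx_row (x : 'cV[R]_(nS b)) (s : MS) :
  (Amx *m x) (enum_rank s) 0 =
  x (enum_rank s) 0 - \sum_(t : MS) Qfun q pi s t * x (enum_rank t) 0.
Proof.
rewrite mxE sum_I.
under eq_bigr => t _ do rewrite !mxE /sval_of !enum_rankK mulrBl.
rewrite sumrB (bigD1 s) //= eqxx mul1r big1 ?addr0 //.
by move=> t ts; rewrite (inj_eq enum_rank_inj) eq_sym (negbTE ts) mul0r.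
Qed.


Lemma unitA : Amx \in unitmx.
Proof.
rewrite unitmxE unitfE -det_tr; apply/negP => /det0P [v vn0 vA].
pose x (s : MS) := v 0 (enum_rank s).
have Hx : forall s, x s = \sum_(j | b j == pi s) q (val s (pi s)) j * x (upd s j).
  move=> s.
  have E : (Amx *m v^T) (enum_rank s) 0 = 0.
    by rewrite -[Amx]trmxK -trmx_mul vA !mxE.
  move: E; rewrite mx_row; under eq_bigr => t _ do rewrite mxE.
  rewrite mxE sumQ => /eqP; rewrite subr_eq0 => /eqP E2; by rewrite /x E2.
have x0 := hom_zero Hx.
move/negP: vn0; apply; apply/eqP/rowP => y.
rewrite [RHS]mxE (_ : y = enum_rank (enum_val y)) ?enum_valK //.
by have := x0 (enum_val y); rewrite /x enum_valK.
Qed.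

Lemma W_eq (s : MS) : Vdelta q r pi s = r (val s (pi s)) +
  \sum_(j | b j == pi s) q (val s (pi s)) j * Vdelta q r pi (upd s j).
Proof.
have E := mulKVmx unitA (Rvec r pi).
move/matrixP: E => /(_ (enum_rank s) 0).
rewrite mx_row sumQ [X in _ = X]mxE /sval_of enum_rankK => <-.
by rewrite /Vdelta addrC subrK.
Qed.


Local Notation W := (Vdelta q r pi).

Lemma W_phase (s : MS) : W s = rt (val s (pi s)) +
  \sum_(j | (b j == pi s) && (j != val s (pi s))) qt (val s (pi s)) j * W (upd s j).
Proof.
have [u [E1 E2]] := @phase r W W_eq s.
by rewrite E2 E1.
Qed.

Definition Yk (y : N -> R) (k : I) (s : MS) := \prod_(p | p != k) y (val s p).
Definition Tsum (y : N -> R) := \sum_(s : MS) (\prod_p y (val s p)) * W s.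
Definition U (y : N -> R) (k : I) (j : N) :=
  \sum_(s : MS) (val s k == j)%:R * Yk y k s * W s.

Lemma Yk_upd y k s j : b j = k -> Yk y k (upd s j) = Yk y k s.
Proof.
move=> bj; apply: eq_bigr => p pk; rewrite updE bj (negbTE pk) //.
Qed.

Lemma Tsum_dec y k : Tsum y = \sum_(j | b j == k) y j * U y k j.
Proof.
rewrite /Tsum /U.
under [RHS]eq_bigr => j _ do rewrite mulr_sumr.
rewrite exchange_big /=; apply: eq_bigr => s _.
rewrite [\prod_p _](bigD1 k) //= (bigD1 (val s k)) ?bs //= eqxx [X in _ + X]big1 ?addr0.
  by rewrite /Yk /= mul1r mulrA.
by move=> j /andP [_ /negbTE]; rewrite eq_sym => ->; rewrite !mul0r mulr0.
Qed.

Lemma U_ext y1 y2 k j : (forall l, b l != k -> y1 l = y2 l) -> U y1 k j = U y2 k j.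
Proof.
move=> H; apply: eq_bigr => s _; congr (_ * _ * _).
apply: eq_bigr => p pk; apply: H; by rewrite bs.
Qed.

Lemma U_swap y k i j : b i = k -> b j = k -> i != j ->
  \sum_(s : MS) (val s k == i)%:R * Yk y k s * W (upd s j) = U y k j.
Proof.
move=> bi bj ij.
pose phi (s : MS) := if val s k == i then upd s j else if val s k == j then upd s i else s.
have hj : forall s : MS, val (upd s j) k = j by move=> s; rewrite -bj upd_at.
have hi : forall s : MS, val (upd s i) k = i by move=> s; rewrite -bi upd_at.
have ji : (j == i) = false by rewrite eq_sym (negbTE ij).
have phiK : cancel phi phi.
  move=> s; rewrite /phi.
  case: (eqVneq (val s k) i) => [si|si].
    rewrite hj ji eqxx upd_upd ?bi ?bj // -si.
    by rewrite (_ : k = b i) ?upd_self // bi.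
  case: (eqVneq (val s k) j) => [sj|sj].
    rewrite hi eqxx upd_upd ?bi ?bj // -sj.
    by rewrite (_ : k = b j) ?upd_self // bj.
  by rewrite (negbTE si) (negbTE sj).
rewrite /U (reindex_inj (can_inj phiK)) /=.
apply: eq_bigr => s _; rewrite /phi.
case: (eqVneq (val s k) i) => [si|si].
  by rewrite hj ji si (negbTE ij) !mul0r.
case: (eqVneq (val s k) j) => [sj|sj].
  rewrite hi eqxx Yk_upd // upd_upd ?bi ?bj // -sj.
  by rewrite (_ : k = b (val s k)) ?upd_self ?sj // bj.
by rewrite (negbTE si) !mul0r.
Qed.


Lemma sumY y k i : b i = k ->
  \sum_(s : MS) (val s k == i)%:R * Yk y k s =
  \prod_(p | p != k) (\sum_(l | b l == p) y l).
Proof.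
move=> bi.
pose z l := if b l == k then (l == i)%:R else y l.
have E1 : \prod_p (\sum_(l | b l == p) z l) = \prod_(p | p != k) (\sum_(l | b l == p) y l).
  rewrite (bigD1 k) //= (bigD1 i) ?bi //= /z bi eqxx eqxx big1 ?addr0 ?mul1r.
    apply: eq_bigr => p pk; apply: eq_bigr => l /eqP bl.
    by rewrite bl (negbTE pk).
  by move=> l /andP [/eqP -> /negbTE ->]; rewrite eqxx.
rewrite -E1 prod_sum; apply: eq_bigr => s _.
rewrite (bigD1 k) //= /z bs eqxx; congr (_ * _).
by apply: eq_bigr => p pk; rewrite bs (negbTE pk).
Qed.

Lemma U_key y n i : Lb i = n -> (forall l, y l != 0 -> (n <= Lb l)%N) ->
  U y (b i) i = rt i * \prod_(p | p != b i) (\sum_(l | b l == p) y l) +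
    \sum_(j | (b j == b i) && (j != i)) qt i j * U y (b i) j.
Proof.
move=> Li Hs; set k := b i.
have per : forall s : MS, (val s k == i)%:R * Yk y k s * W s =
    (val s k == i)%:R * Yk y k s *
    (rt i + \sum_(j | (b j == k) && (j != i)) qt i j * W (upd s j)).
  move=> s; case: (eqVneq (val s k) i) => [si|_]; last by rewrite !mul0r.
  case: (eqVneq (Yk y k s) 0) => [->|Ynz]; first by rewrite mulr0 !mul0r.
  have pk : pi s = k.
    apply: pi_char => p pk; rewrite si.
    move/prodf_neq0: Ynz => /(_ p pk) /Hs.
    rewrite -Li leq_eqVlt => /orP [/eqP E|//].
    move/Linj: E => [] E; move: pk; by rewrite -(bs s p) -E eqxx.
  by rewrite {1}W_phase pk si.
rewrite /U (eq_bigr _ (fun s _ => per s)).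
under eq_bigr => s _ do rewrite mulrDr.
rewrite big_split /=; congr (_ + _).
  rewrite -(sumY y (erefl k)) mulr_sumr; apply: eq_bigr => s _; ring.
under eq_bigr => s _ do rewrite mulr_sumr.
rewrite exchange_big /=; apply: eq_bigr => j /andP [/eqP bj ji].
have ij : i != j by rewrite eq_sym.
have := U_swap y (erefl k) bj ij; rewrite /U => <-.
rewrite mulr_sumr.
apply: eq_bigr => s _; ring.
Qed.


Definition EInv (w : R) (n : nat) (VY : R * (N -> R)) :=
  (forall j, VY.2 j != 0 -> (n <= Lb j)%N) /\ VY.1 + Tsum VY.2 = w.

Lemma step_inv w n VY : EInv w n VY -> EInv w n.+1 (eval_step b L q r n VY).
Proof.
case: VY => V y [Hs HV]; rewrite /= in Hs HV; rewrite /eval_step; case: pickP => [i /eqP Li | Hn] /=; last first.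
  split=> // j /Hs; rewrite leq_eqVlt => /orP [/eqP E|//].
  by move: (Hn j); rewrite /= -E eqxx.
have neqn : forall j, j != i -> Lb j != n.
  move=> j ji; apply/negP; rewrite -Li => /eqP /Linj [] E.
  by move: ji; rewrite E eqxx.
split.
  move=> j; case: (eqVneq j i) => [->|ji] /=; first by rewrite eqxx eqxx.
  rewrite (negbTE ji) andbT.
  case bj: (b j == b i) => /=.
    case: (eqVneq (y j) 0) => [yj|/Hs yj].
      rewrite yj add0r mulf_eq0 negb_or => /andP [_ nz].
      by rewrite -Li; apply: qt_supp => //; apply/eqP.
    by move=> _; rewrite ltn_neqAle eq_sym neqn.
  by move=> /Hs yj; rewrite ltn_neqAle eq_sym neqn.
rewrite -HV (Tsum_dec _ (b i)) (Tsum_dec y (b i)).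
set y' := (fun j : N => if j == i then _ else _).
have UE : forall j, U y' (b i) j = U y (b i) j.
  move=> j; apply: U_ext => l bl; rewrite /y'.
  have li : l != i by apply: contraNneq bl => ->.
  by rewrite (negbTE li) (negbTE bl).
rewrite /=.
rewrite [X in _ + X = _](eq_bigr (fun j => y' j * U y (b i) j)); last by move=> j _; rewrite UE.
rewrite (bigD1 i) //= [in RHS](bigD1 i) //=.
rewrite {1}/y' eqxx mul0r add0r.
have E : \sum_(j | (b j == b i) && (j != i)) y' j * U y (b i) j =
    \sum_(j | (b j == b i) && (j != i)) y j * U y (b i) j +
    y i * \sum_(j | (b j == b i) && (j != i)) qt i j * U y (b i) j.
  rewrite mulr_sumr -big_split /=; apply: eq_bigr => j /andP [bj ji].
  rewrite /y' (negbTE ji) bj /=; ring.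
rewrite E (U_key Li Hs).
set P := \prod_(p | p != b i) _.
set S1 := \sum_(j | _) y j * _.
set S2 := \sum_(j | _) qt i j * _.
ring.
Qed.

Lemma fold_inv w m : forall n VY, EInv w n VY ->
  EInv w (n + m) (foldl (fun VY n => eval_step b L q r n VY) VY (iota n m)).
Proof.
elim: m => [|m IH] n VY H /=; first by rewrite addn0.
rewrite -addSnnS; apply: IH; exact: step_inv.
Qed.


Hypothesis Lpos : forall x, (1 <= L x)%N.
Hypothesis LN : L None = #|N|.+1.

Lemma main (shat : MS) : evaluator L q r shat = W shat.
Proof.
pose y0 := fun j => (j == val shat (b j))%:R : R.
have H0 : EInv (W shat) 1 (0, y0).
  split=> /=; first by move=> j _; apply: Lpos.
  rewrite add0r /Tsum (bigD1 shat) //= [X in _ + X]big1 ?addr0.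
    rewrite big1 ?mul1r // => p _; by rewrite /y0 bs eqxx.
  move=> s ss; rewrite /y0.
  have [p Hp] : exists p, val s p != val shat p.
    apply/existsP; apply: contraNT ss => /existsPn H; apply/eqP/ms_eq => p.
    by apply/eqP; move: (H p); rewrite negbK.
  by rewrite (bigD1 p) //= bs (negbTE Hp) !mul0r.
have [Hs HV] := fold_inv #|N| H0.
rewrite /evaluator -HV.
set VY := foldl _ _ _ in Hs HV *.
have y0' : forall j, VY.2 j = 0.
  move=> j; apply/eqP/negPn/negP => /Hs; rewrite add1n => H.
  have E : L (Some j) = L None by rewrite LN; apply/eqP; rewrite eqn_leq Lbound H.
  by move/Linj: E.
rewrite /Tsum big1 ?addr0 // => s _.
by rewrite (bigD1 (pi shat)) //= y0' !mul0r.
Qed.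

End Main.

Unset Implicit Arguments.

Theorem proposition4p2 (R : realFieldType) (I N : finType) (b : N -> I)
  (Nk_nonempty : forall k : I, exists j : N, b j = k)
  (q : N -> N -> R) (r : N -> R)
  (HC : hypC b q r)
  (shat : mstate b) (L : option N -> nat) (HL : labeling L)
  (pi : mstate b -> I) (Hpi : priority_rule L pi) :
  evaluator L q r shat = Vdelta q r pi shat.
Proof.
case: HC => qnn [qtr _].
case: HL => Linj [Lr LN].
apply: main => //.
- by move=> x; case/andP: (Lr x).
- by move=> x; case/andP: (Lr x).
Qed.
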